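(* Let $\delta\in(0,1)$, let $\varepsilon\in\{\pm1\}^n$ have independent Rademacher entries, and let $e_j$ be the $j$-th canonical basis vector of $\mathbb{R}^n$. Then $$\mathbb{P}\Big\{\max_{j=1,\dots,n}\|e_j^\top W\,\mathrm{diag}(\varepsilon)\,U\bar D\|_2\geqslant\sqrt{\tfrac{d_e}{n}}+\sqrt{\tfrac{8\log(n/\delta)}{n}}\Big\}\leqslant\delta .$$
   Context: Let $A\in\mathbb{R}^{n\times d}$, $A\neq0$, with $n\geqslant d$ and $n$ a power of $2$, $\Lambda\in\mathbb{R}^{d\times d}$ diagonal with $\Lambda\succeq I_d$, $\nu>0$. Let $A(A^\top A+\nu^2\Lambda)^{-1/2}=UDV^\top$ be a thin SVD ($U\in\mathbb{R}^{n\times d}$ with orthonormal columns, $D$ diagonal nonnegative), $\bar D=D/\|D\|_2$, and $d_e=\|D\|_F^2/\|D\|_2^2$. $W\in\mathbb{R}^{n\times n}$ is the normalized (orthonormal) Walsh–Hadamard matrix, whose entries all have magnitude $n^{-1/2}$. *)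

(* Defs.v *)
From HB Require Import structures.
From mathcomp Require Import all_boot all_order all_algebra.
From mathcomp Require Import all_classical all_reals.
From mathcomp Require Import exp.
Set Implicit Arguments. Unset Strict Implicit. Unset Printing Implicit Defensive.
Import Order.TTheory GRing.Theory Num.Theory.
Local Open Scope ring_scope.

Section Defs.
Variable R : realType.

Definition cnorm m (x : 'cV[R]_m) : R := Num.sqrt (\sum_i x i 0 ^+ 2).
Definition rnorm m (x : 'rV[R]_m) : R := Num.sqrt (\sum_i x 0 i ^+ 2).

Definition frob m p (M : 'M[R]_(m, p)) : R :=
  Num.sqrt (\sum_i \sum_j M i j ^+ 2).

Definition opnorm m p (M : 'M[R]_(m, p)) : R :=
  sup [set r : R | exists x : 'cV[R]_p, cnorm x = 1 /\ r = cnorm (M *m x)].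

Definition posdef m (S : 'M[R]_m) : Prop :=
  S^T = S /\ forall x : 'cV[R]_m, x != 0 -> 0 < (x^T *m S *m x) 0 0.

(* S is the (principal) inverse square root M^{-1/2} of M:
   S symmetric positive definite and S * S * M = I *)
Definition is_inv_sqrt m (M S : 'M[R]_m) : Prop :=
  posdef S /\ S *m S *m M = 1%:M.

(* normalized Walsh-Hadamard (Sylvester) matrix of size 2^k:
   W i j = (-1)^{<bits i, bits j>} / sqrt(2^k) *)
Definition walsh_hadamard (k : nat) : 'M[R]_(2 ^ k) :=
  \matrix_(i, j) ((-1) ^+ (\sum_(b < k) (odd (i %/ 2 ^ b) && odd (j %/ 2 ^ b)))
                   / Num.sqrt (2 ^ k)%:R).

Definition radvec m (e : {ffun 'I_m -> bool}) : 'rV[R]_m :=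
  \row_i (if e i then 1 else -1).

(* probability of an event under independent Rademacher signs (uniform on {+-1}^m) *)
Definition radprob m (E : {ffun 'I_m -> bool} -> bool) : R :=
  #|[set e | E e]|%:R / (2 ^ m)%:R.

End Defs.

(* Main.v *)
Require Import Defs.
From HB Require Import structures.
From mathcomp Require Import all_boot all_order all_algebra.
From mathcomp Require Import all_classical all_reals.
From mathcomp Require Import exp.
From mathcomp Require Import sequences.
From mathcomp Require Import ring lra.
Set Implicit Arguments. Unset Strict Implicit. Unset Printing Implicit Defensive.
Import Order.TTheory GRing.Theory Num.Theory.
Local Open Scope ring_scope.

Section Cosh.
Variable R : realType.

Lemma cosh_bound (x : R) : expR x + expR (- x) <= 2 * expR (7/4 * x ^+ 2).
Proof.
have key : forall y : R, 0 <= y -> expR y + expR (- y) <= 2 * expR (7/4 * y ^+ 2).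
  move=> y y0.
  have [yl|yg] := ltP y (4/7).
  - have e1 : 1 - y <= expR (- y) by have := expR_ge1Dx (- y).
    have e2 : 1 + y <= expR y by exact: expR_ge1Dx.
    have e3 : 1 + 7/4 * y^+2 <= expR (7/4 * y ^+ 2) by exact: expR_ge1Dx.
    have p := expRxMexpNx_1 y.
    have a0 := expR_gt0 y. have b0 := expR_gt0 (- y).
    set a := expR y in e2 p a0 *. set b := expR (-y) in e1 p b0 *.
    suff : a + b <= 2 + 7/2 * y ^+ 2 by lra.
    have ha : a * (1 - y) <= 1 by rewrite -[X in _ <= X]p ler_pM2l.
    have hb : b * (1 + y) <= 1 by rewrite -[X in _ <= X]p [a * b]mulrC ler_pM2l.
    nra.
  - have h1 : expR (- y) <= expR y by rewrite ler_expR; lra.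
    have h2 : expR y <= expR (7/4 * y ^+ 2) by rewrite ler_expR; nra.
    lra.
have [x0|x0] := leP 0 x; first exact: key.
have := key (- x); rewrite opprK sqrrN addrC; apply; lra.
Qed.
End Cosh.


Section Forms.
Variable R : realType.
Variable d : nat.
Implicit Types G K : 'M[R]_d.
Implicit Types x y z w : 'cV[R]_d.

Definition form G x y : R := \sum_i x i 0 * (G *m y) i 0.
Definition dot x y : R := \sum_i x i 0 * y i 0.

Lemma formDl G x y z : form G (x + y) z = form G x z + form G y z.
Proof. by rewrite /form -big_split; apply: eq_bigr => i _; rewrite mxE mulrDl. Qed.
Lemma formZl G a x z : form G (a *: x) z = a * form G x z.
Proof. by rewrite /form mulr_sumr; apply: eq_bigr => i _; rewrite mxE mulrA. Qed.
Lemma formDr G x y z : form G x (y + z) = form G x y + form G x z.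
Proof. by rewrite /form -big_split; apply: eq_bigr => i _; rewrite mulmxDr mxE mulrDr. Qed.
Lemma formZr G a x z : form G x (a *: z) = a * form G x z.
Proof.
by rewrite /form mulr_sumr; apply: eq_bigr => i _; rewrite -scalemxAr mxE mulrCA.
Qed.
Lemma formDm G K x y : form (G + K) x y = form G x y + form K x y.
Proof. by rewrite /form -big_split; apply: eq_bigr => i _; rewrite mulmxDl mxE mulrDr. Qed.
Lemma formZm G a x y : form (a *: G) x y = a * form G x y.
Proof.
by rewrite /form mulr_sumr; apply: eq_bigr => i _; rewrite -scalemxAl mxE mulrCA.
Qed.
Lemma formNm G K x y : form (G - K) x y = form G x y - form K x y.
Proof.
rewrite /form -sumrB; apply: eq_bigr => i _.
by rewrite mulmxBl !mxE mulrBr.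
Qed.
Lemma form0l G y : form G 0 y = 0.
Proof. by rewrite /form big1 // => i _; rewrite mxE mul0r. Qed.
Lemma form1 x y : form 1%:M x y = dot x y.
Proof. by rewrite /form mul1mx. Qed.
Lemma dotC x y : dot x y = dot y x.
Proof. by apply: eq_bigr => i _; rewrite mulrC. Qed.
Lemma dot_ge0 x : 0 <= dot x x.
Proof. by apply: sumr_ge0 => i _; rewrite -expr2 sqr_ge0. Qed.
Lemma form_mulG G w z : form 1%:M w (G *m z) = form G w z.
Proof. by rewrite /form mul1mx. Qed.
Lemma form_sym G x y : G^T = G -> form G x y = form G y x.
Proof.
move=> Gs; rewrite /form.
under eq_bigr => i _ do rewrite mxE mulr_sumr.
under [RHS]eq_bigr => i _ do rewrite mxE mulr_sumr.
rewrite exchange_big /=; apply: eq_bigr => i _; apply: eq_bigr => j _.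
have -> : G j i = G i j by rewrite -{1}Gs mxE.
by ring.
Qed.
Lemma outer_mul u y : (u *m u^T) *m y = dot u y *: u.
Proof.
apply/matrixP => i j; rewrite !mxE /dot mulr_suml; apply: eq_bigr => k _.
rewrite !mxE big_ord1 !mxE (ord1 j); ring.
Qed.
Lemma form_outer x y u : form (u *m u^T) x y = dot u y * dot x u.
Proof.
rewrite /form outer_mul /dot mulr_sumr; apply: eq_bigr => i _.
by rewrite mxE mulrCA.
Qed.
Lemma dot_mulG G y w : dot (G *m w) y = form G y w.
Proof. by rewrite /dot /form; apply: eq_bigr => i _; rewrite mulrC. Qed.
Lemma outer_sym (u : 'cV[R]_d) : (u *m u^T)^T = u *m u^T.
Proof. by rewrite trmx_mul trmxK. Qed.
Lemma trD (A B : 'M[R]_d) : (A + B)^T = A^T + B^T.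
Proof. by apply/matrixP => i j; rewrite !mxE. Qed.
Lemma trZ (a : R) (A : 'M[R]_d) : (a *: A)^T = a *: A^T.
Proof. by apply/matrixP => i j; rewrite !mxE. Qed.

End Forms.


Section Core.
Variable R : realType.
Variables d n : nat.
Variable w : 'I_n -> 'cV[R]_d.
Variable lam : R.
Hypothesis lam0 : 0 <= lam.
Hypothesis lam1 : 7 * lam < 1.

Definition sgn (b : bool) : R := if b then 1 else -1.
Definition rsum m (e : {ffun 'I_n -> bool}) : 'cV[R]_d :=
  \sum_(i < n | (m <= i)%N) sgn (e i) *: w i.

Lemma split_sum (V : zmodType) m (mn : (m < n)%N) (f : 'I_n -> V) :
  \sum_(i < n | (m <= i)%N) f i = f (Ordinal mn) + \sum_(i < n | (m.+1 <= i)%N) f i.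
Proof.
rewrite (bigD1 (Ordinal mn)) //=; congr (_ + _); apply: eq_bigl => i.
rewrite -val_eqE /=; by case: ltngtP.
Qed.

Lemma sum_out (V : zmodType) m (f : 'I_n -> V) : (n <= m)%N ->
  \sum_(i < n | (m <= i)%N) f i = 0.
Proof.
move=> nm; rewrite big_pred0 // => i; apply/negbTE; rewrite -ltnNge.
exact: leq_trans (ltn_ord i) nm.
Qed.

Lemma sum_const_ffun (c : R) : \sum_(e : {ffun 'I_n -> bool}) c = (2 ^ n)%:R * c.
Proof. by rewrite sumr_const card_ffun card_bool card_ord mulr_natl. Qed.

Definition flip (i0 : 'I_n) (e : {ffun 'I_n -> bool}) : {ffun 'I_n -> bool} :=
  [ffun i => if i == i0 then ~~ e i else e i].

Lemma flipK i0 : involutive (flip i0).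
Proof.
move=> e; apply/ffunP => i; rewrite !ffunE; case: eqP => // _; by rewrite negbK.
Qed.

Lemma flip_at i0 e : flip i0 e i0 = ~~ e i0.
Proof. by rewrite ffunE eqxx. Qed.

Lemma rsum_flip m (mn : (m < n)%N) e : rsum m.+1 (flip (Ordinal mn) e) = rsum m.+1 e.
Proof.
apply: eq_bigr => i hi; rewrite ffunE; case: eqP => [ei|] //.
by move: hi; rewrite ei /= ltnn.
Qed.

Lemma pair_bound (G : 'M[R]_d) (w0 r : 'cV[R]_d) (s : R) : G^T = G -> s ^+ 2 = 1 ->
  expR (lam * form G (s *: w0 + r) (s *: w0 + r))
  + expR (lam * form G ((- s) *: w0 + r) ((- s) *: w0 + r))
  <= 2 * (expR (lam * form G w0 w0) *
          expR (lam * form (G + (7 * lam) *: ((G *m w0) *m (G *m w0)^T)) r r)).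
Proof.
move=> Gs s2.
have E t : form G (t *: w0 + r) (t *: w0 + r)
    = t ^+ 2 * form G w0 w0 + form G r r + 2 * t * form G r w0.
  rewrite !formDl !formDr !formZl !formZr (form_sym w0 r Gs); ring.
rewrite !E sqrrN s2 formDm formZm form_outer dot_mulG dotC dot_mulG.
set a := form G r w0; set b := form G w0 w0; set q := form G r r.
have e1 : lam * (1 * b + q + 2 * s * a) = (lam * b + lam * q) + 2 * lam * s * a by ring.
have e2 : lam * (1 * b + q + 2 * - s * a) = (lam * b + lam * q) + - (2 * lam * s * a)
  by ring.
have e3 : lam * (q + 7 * lam * (a * a)) = lam * q + 7 / 4 * (2 * lam * s * a) ^+ 2.
  by rewrite !exprMn s2; field.
rewrite e1 e2 e3 !expRD -mulrDr.
have h := cosh_bound (2 * lam * s * a).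
have p0 : 0 <= expR (lam * b) * expR (lam * q) by rewrite mulr_ge0 // expR_ge0.
apply: le_trans (ler_wpM2l p0 h) _.
by rewrite le_eqVlt; apply/orP; left; apply/eqP; ring.
Qed.


Lemma sgnN b : sgn (~~ b) = - sgn b.
Proof. by case: b; rewrite /sgn /= ?opprK. Qed.
Lemma sgn2 b : sgn b ^+ 2 = 1.
Proof. by case: b; rewrite /sgn ?sqrrN expr1n. Qed.

Lemma core_ind k : forall m, (n <= m + k)%N -> forall G K : 'M[R]_d,
  G^T = G -> (forall x, 0 <= form G x x) ->
  (forall x, form K (G *m x) (G *m x) <= form G x x) ->
  (forall y, (1 - 7 * lam) * dot y y
       + 7 * lam * \sum_(i < n | (m <= i)%N) dot (w i) y ^+ 2 <= form K y y) ->
  \sum_(e : {ffun 'I_n -> bool}) expR (lam * form G (rsum m e) (rsum m e))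
    <= (2 ^ n)%:R * expR (lam / (1 - 7 * lam) * \sum_(i < n | (m <= i)%N) dot (w i) (w i)).
Proof.
elim: k => [|k IH] m hm G K Gs Gp J C.
  rewrite addn0 in hm.
  under eq_bigr => e _ do rewrite /rsum sum_out // form0l mulr0 expR0.
  by rewrite sum_out // mulr0 expR0 sum_const_ffun.
have [nm|mn] := leqP n m.
  by apply: (IH m _ G K) => //; rewrite (leq_trans nm) // leq_addr.
set i0 := Ordinal mn.
set mu := 7 * lam.
set u := G *m w i0.
set G' := G + mu *: (u *m u^T).
set K' := K - mu *: (w i0 *m (w i0)^T).
set b := form G (w i0) (w i0).
have mu0 : 0 <= mu by rewrite /mu mulr_ge0.
have mu1 : 0 < 1 - mu by rewrite subr_gt0.
have b0 : 0 <= b := Gp _.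
have hb : b <= dot (w i0) (w i0) / (1 - mu).
  have h1 : (1 - mu) * dot u u <= b.
    apply: le_trans (J (w i0)).
    have := C u.
    have : 0 <= 7 * lam * \sum_(i < n | (m <= i)%N) dot (w i) u ^+ 2.
      by rewrite mulr_ge0 // sumr_ge0 // => i _; rewrite sqr_ge0.
    rewrite /u /mu; lra.
  have hbu : b = dot (w i0) u by rewrite /b /u -form_mulG form1.
  set s := (1 - mu)^-1.
  have s0 : 0 < s by rewrite invr_gt0.
  have ss : s * (1 - mu) = 1 by rewrite mulVf // gt_eqF.
  have h2 := dot_ge0 (s *: w i0 + (-1) *: u).
  rewrite -!form1 !formDl !formDr !formZl !formZr !form1 (dotC u (w i0)) -hbu in h2.
  have h3 : dot u u <= s * b.
    by rewrite -[dot u u]mul1r -ss -mulrA ler_wpM2l // ltW.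
  rewrite /= -/s; nra.
have split_r e : rsum m e = sgn (e i0) *: w i0 + rsum m.+1 e := split_sum mn _.
have hk : (n <= m.+1 + k)%N by rewrite addSnnS.
have Gs' : G'^T = G' by rewrite /G' trD trZ outer_sym Gs.
have Gp' : forall x, 0 <= form G' x x.
  move=> x; rewrite /G' formDm formZm form_outer (dotC x u).
  by rewrite addr_ge0 // mulr_ge0 // -expr2 sqr_ge0.
have J' : forall x, form K' (G' *m x) (G' *m x) <= form G' x x.
  move=> x.
  set a := form G x (w i0).
  have Ga : form G (w i0) x = a by rewrite /a form_sym.
  have eG : G' *m x = G *m (x + (mu * a) *: w i0).
    rewrite /G' mulmxDl -scalemxAl outer_mul mulmxDr -scalemxAr scalerA.
    by rewrite /u dot_mulG.
  rewrite eG /K' formNm formZm form_outer.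
  have := J (x + (mu * a) *: w i0).
  rewrite dotC !dot_mulG !formDl !formDr !formZl !formZr -/a Ga -/b.
  rewrite /G' formDm formZm form_outer (dotC x u) /u dot_mulG -/a.
  have : 0 <= mu * (a ^+ 2) * (mu * b) * (1 + mu * b).
    by apply: mulr_ge0; [apply: mulr_ge0; [apply: mulr_ge0 => //; apply: sqr_ge0| apply: mulr_ge0] | apply: addr_ge0 => //; apply: mulr_ge0].
  nra.
have C' : forall y, (1 - 7 * lam) * dot y y
       + 7 * lam * \sum_(i < n | (m.+1 <= i)%N) dot (w i) y ^+ 2 <= form K' y y.
  move=> y; rewrite /K' formNm formZm form_outer (dotC y (w i0)).
  have := C y; rewrite (split_sum mn) /= -/mu.
  lra.
have IH' := IH m.+1 hk G' K' Gs' Gp' J' C'.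
set F := fun e => expR (lam * form G (rsum m e) (rsum m e)).
have flipsum : \sum_e F e = \sum_e F (flip i0 e).
  exact: (reindex_inj (inv_inj (flipK i0))).
have pt : forall e, F e + F (flip i0 e) <=
    2 * (expR (lam * b) * expR (lam * form G' (rsum m.+1 e) (rsum m.+1 e))).
  move=> e; rewrite /F !split_r rsum_flip flip_at sgnN.
  exact: pair_bound Gs (sgn2 _).
have h2 : 2 * \sum_e F e <=
    2 * (expR (lam * b) * ((2 ^ n)%:R *
      expR (lam / (1 - mu) * \sum_(i < n | (m.+1 <= i)%N) dot (w i) (w i)))).
  have -> : 2 * \sum_e F e = \sum_e (F e + F (flip i0 e)).
    by rewrite big_split /= -flipsum; ring.
  apply: le_trans (ler_sum _ (fun e _ => pt e)) _.
  rewrite -!mulr_sumr; rewrite ler_wpM2l // ler_wpM2l ?expR_ge0 //.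
have h3 : \sum_e F e <= expR (lam * b) * ((2 ^ n)%:R *
      expR (lam / (1 - mu) * \sum_(i < n | (m.+1 <= i)%N) dot (w i) (w i))).
  by rewrite -(ler_pM2l (_ : (0:R) < 2)) //.
apply: le_trans h3 _.
rewrite (split_sum mn) /= -/i0 mulrCA ler_wpM2l // -expRD ler_expR.
rewrite mulrDr lerD2r.
have -> : lam / (1 - mu) * dot (w i0) (w i0) = lam * (dot (w i0) (w i0) / (1 - mu)).
  by ring.
exact: ler_wpM2l.
Qed.

Lemma core : (forall y, \sum_i dot (w i) y ^+ 2 <= dot y y) ->
  \sum_(e : {ffun 'I_n -> bool}) expR (lam * dot (rsum 0 e) (rsum 0 e))
    <= (2 ^ n)%:R * expR (lam / (1 - 7 * lam) * \sum_i dot (w i) (w i)).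
Proof.
move=> hw.
have e0 : forall (V : zmodType) (f : 'I_n -> V),
    \sum_(i < n | (0 <= i)%N) f i = \sum_i f i by move=> V f; apply: eq_bigl.
have h1 : forall x : 'cV[R]_d, 0 <= form 1%:M x x by move=> x; rewrite form1 dot_ge0.
have h2 : forall x : 'cV[R]_d, form 1%:M (1%:M *m x) (1%:M *m x) <= form 1%:M x x.
  by move=> x; rewrite mul1mx.
have h3 : forall y : 'cV[R]_d, (1 - 7 * lam) * dot y y
       + 7 * lam * \sum_(i < n | (0 <= i)%N) dot (w i) y ^+ 2 <= form 1%:M y y.
  move=> y; rewrite e0 form1.
  have hy : 0 <= dot y y - \sum_i dot (w i) y ^+ 2 by rewrite subr_ge0.
  have := mulr_ge0 lam0 hy; lra.
have := @core_ind n 0 (leqnn n) 1%:M 1%:M (trmx1 _ _) h1 h2 h3.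
rewrite e0.
by under eq_bigr => e _ do rewrite form1.
Qed.

End Core.

Section Bridge.
Variable R : realType.

Lemma dotE d (x y : 'cV[R]_d) : dot x y = (x^T *m y) 0 0.
Proof. by rewrite mxE; apply: eq_bigr => i _; rewrite mxE. Qed.

Lemma le_sumsq d (x : 'cV[R]_d) i : x i 0 ^+ 2 <= \sum_l x l 0 ^+ 2.
Proof.
rewrite (bigD1 i) //= lerDl; apply: sumr_ge0 => l _; exact: sqr_ge0.
Qed.

Lemma opnorm_ge d (Dv : 'rV[R]_d) c : 0 <= Dv 0 c -> Dv 0 c <= opnorm (diag_mx Dv).
Proof.
move=> h0; rewrite /opnorm; apply: ub_le_sup.
- exists (Num.sqrt (\sum_i Dv 0 i ^+ 2)) => r [x [x1 ->]].
  rewrite /cnorm ler_sqrt ?sumr_ge0 // => [|i _]; last exact: sqr_ge0.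
  have sx : \sum_l x l 0 ^+ 2 = 1.
    by rewrite -[LHS]sqr_sqrtr ?sumr_ge0 // => [|i _]; [rewrite -/(cnorm x) x1 expr1n|exact: sqr_ge0].
  apply: ler_sum => i _; rewrite mul_diag_mx mxE exprMn.
  have := le_sumsq x i; rewrite sx => hx.
  by rewrite ler_piMr ?sqr_ge0.
- exists (delta_mx c 0); split.
    rewrite /cnorm (bigD1 c) //= big1 => [|i ic]; last by rewrite mxE (negbTE ic) expr0n.
    by rewrite mxE !eqxx addr0 expr1n sqrtr1.
  rewrite /cnorm (bigD1 c) //= big1 => [|i ic].
    by rewrite mul_diag_mx mxE mxE !eqxx mulr1 addr0 sqrtr_sqr ger0_norm.
  by rewrite mul_diag_mx mxE mxE (negbTE ic) mulr0 expr0n.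
Qed.

End Bridge.

Lemma bigmax_ex (R : realType) n (F : 'I_n -> R) (x : R) : 0 < x ->
  x <= \big[Order.max/0]_(j < n) F j -> exists j, x <= F j.
Proof.
move=> x0 hx; apply/not_existsP => hn.
suff : \big[Order.max/0]_(j < n) F j < x by rewrite ltNge hx.
apply: (big_ind (fun y => y < x)) => //.
- by move=> a b ha hb; rewrite gt_max ha hb.
- by move=> j _; rewrite ltNge; apply/negP => hj; apply: (hn j).
Qed.

Theorem lemma7p1 (R : realType) (k d : nat)
  (A : 'M[R]_(2 ^ k, d)) (lam : 'rV[R]_d) (nu : R)
  (S : 'M[R]_d) (U : 'M[R]_(2 ^ k, d)) (Dv : 'rV[R]_d) (V : 'M[R]_d)
  (delta : R) :
  (d <= 2 ^ k)%N ->
  A != 0 ->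
  (forall i, 1 <= lam 0 i) ->
  0 < nu ->
  is_inv_sqrt (A^T *m A + nu ^+ 2 *: diag_mx lam) S ->
  U^T *m U = 1%:M ->
  V^T *m V = 1%:M ->
  (forall i, 0 <= Dv 0 i) ->
  A *m S = U *m diag_mx Dv *m V^T ->
  0 < delta < 1 ->
  let n := (2 ^ k)%N in
  let D := diag_mx Dv in
  let Dbar := (opnorm D)^-1 *: D in
  let de := frob D ^+ 2 / opnorm D ^+ 2 in
  radprob R (fun e : {ffun 'I_n -> bool} =>
    (\big[Order.max/0]_(j < n)
        rnorm (row j (@walsh_hadamard R k *m diag_mx (@radvec R n e) *m U *m Dbar)))
    >= Num.sqrt (de / n%:R) + Num.sqrt (8 * ln (n%:R / delta) / n%:R))
  <= delta.
Proof.
move=> _ _ _ _ _ hU _ hDv _ /andP[dl0 dl1].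
cbv zeta.
set n := (2 ^ k)%N.
set D := diag_mx Dv.
set op := opnorm D.
set de := frob D ^+ 2 / op ^+ 2.
set N : R := n%:R.
have n0 : (0 < n)%N by rewrite expn_gt0.
have N0 : 0 < N by rewrite ltr0n.
set dbar := fun c => Dv 0 c / op.
have Dle c : Dv 0 c <= op := opnorm_ge (hDv c).
have db0 c : 0 <= dbar c by rewrite divr_ge0 // (le_trans (hDv c) (Dle c)).
have db1 c : dbar c ^+ 2 <= 1.
  rewrite /dbar; have [op0|op0] := eqVneq op 0.
    by rewrite op0 invr0 mulr0 expr0n ler01.
  have opp : 0 < op by rewrite lt_def op0 (le_trans (hDv c) (Dle c)).
  rewrite expr_le1 //; first by rewrite ler_pdivrMr // mul1r.
  exact: db0.
have de_eq : de = \sum_c dbar c ^+ 2.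
  have hD : \sum_i \sum_j D i j ^+ 2 = \sum_i Dv 0 i ^+ 2.
    apply: eq_bigr => i _; rewrite (bigD1 i) //= big1 => [|j ji].
      by rewrite /D mxE eqxx mulr1n addr0.
    by rewrite /D mxE eq_sym (negbTE ji) mulr0n expr0n.
  rewrite /de /frob sqr_sqrtr; last first.
    by apply: sumr_ge0 => i _; apply: sumr_ge0 => j _; exact: sqr_ge0.
  by rewrite hD mulr_suml; apply: eq_bigr => c _; rewrite /dbar expr_div_n.
have de0 : 0 <= de by rewrite de_eq sumr_ge0 // => c _; exact: sqr_ge0.
set L := ln (N / delta).
have L0 : 0 < L.
  apply: ln_gt0; rewrite ltr_pdivlMr // mul1r.
  by apply: lt_le_trans dl1 _; rewrite /N ler1n.
set a := Num.sqrt (de / N).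
set bq := Num.sqrt (8 * L / N).
set thr := a + bq.
set F := Num.sqrt N * a.
set t := Num.sqrt N * bq.
have sN : Num.sqrt N ^+ 2 = N by rewrite sqr_sqrtr // ltW.
have F2 : F ^+ 2 = de.
  rewrite /F exprMn sN sqr_sqrtr; last exact: divr_ge0 de0 (ltW N0).
  by rewrite mulrC divfK // gt_eqF.
have t2 : t ^+ 2 = 8 * L.
  rewrite /t exprMn sN sqr_sqrtr; last by rewrite divr_ge0 ?mulr_ge0 // ltW.
  by rewrite mulrC divfK // gt_eqF.
have F0 : 0 <= F by rewrite mulr_ge0 ?sqrtr_ge0.
have t0 : 0 < t by rewrite mulr_gt0 ?sqrtr_gt0 ?divr_gt0 ?mulr_gt0.
have thr0 : 0 < thr.
  by rewrite /thr ltr_pwDr ?sqrtr_ge0 ?sqrtr_gt0 ?divr_gt0 ?mulr_gt0.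
have thrT : forall r, 0 <= r -> thr <= Num.sqrt (r / N) -> (F + t) ^+ 2 <= r.
  move=> r r0 h.
  have h1 : F + t <= Num.sqrt N * Num.sqrt (r / N).
    by rewrite /F /t -mulrDr ler_wpM2l ?sqrtr_ge0.
  have h2 : (Num.sqrt N * Num.sqrt (r / N)) ^+ 2 = r.
    by rewrite exprMn sN sqr_sqrtr ?divr_ge0 ?ler0n // mulrC divfK // gt_eqF.
  have t0' := ltW t0.
  rewrite -[X in _ <= X]h2; nra.
set lm := t / (7 * F + 8 * t).
have D0 : 0 < 7 * F + 8 * t by have := mulr_ge0 (_ : 0 <= 7) F0; lra.
have lm0 : 0 <= lm by rewrite divr_ge0 // ltW.
have lm1 : 7 * lm < 1.
  by rewrite /lm mulrA ltr_pdivrMr // mul1r; lra.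
have expo : lm / (1 - 7 * lm) * de - lm * (F + t) ^+ 2 <= - L.
  have D1 : 0 < 7 * F + t by lra.
  have key : lm / (1 - 7 * lm) * F ^+ 2 - lm * (F + t) ^+ 2
      = - (t ^+ 2 / 8) - t ^+ 2 * F * (7 * F + 9 * t) / (8 * (7 * F + t) * (7 * F + 8 * t)).
    by rewrite /lm; field; rewrite (gt_eqF D0) (gt_eqF D1).
  have L8 : L = t ^+ 2 / 8 by rewrite t2; field.
  rewrite -F2 key L8.
  have : 0 <= t ^+ 2 * F * (7 * F + 9 * t) / (8 * (7 * F + t) * (7 * F + 8 * t)).
    apply: divr_ge0; first (apply: mulr_ge0; [apply: mulr_ge0 => //; exact: sqr_ge0 | lra]).
    apply: mulr_ge0; [apply: mulr_ge0 => //; lra | lra].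
  lra.
set W := walsh_hadamard R k.
have perj : forall j : 'I_n, \sum_(e : {ffun 'I_n -> bool})
    (if thr <= rnorm (row j (W *m diag_mx (radvec R e) *m U *m (op^-1 *: D)))
     then 1 else 0) <= (2 ^ n)%:R * (delta / N).
  move=> j.
  set w := fun i : 'I_n => \col_(c < d) (W j i * Num.sqrt N * U i c * dbar c).
  have sNz : Num.sqrt N != 0 by rewrite gt_eqF // sqrtr_gt0.
  have hs : forall i, (W j i * Num.sqrt N) ^+ 2 = 1.
    move=> i; rewrite /W mxE divfK //.
    by rewrite -exprM mulnC exprM expr2 mulrNN mulr1 expr1n.
  have hrow : forall e c,
      (row j (W *m diag_mx (radvec R e) *m U *m (op^-1 *: D))) 0 c
      = (Num.sqrt N)^-1 * (rsum w 0 e) c 0.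
    move=> e c; rewrite mxE -scalemxAr mxE /D mul_mx_diag mxE mxE.
    rewrite /rsum summxE mulr_suml !mulr_sumr; apply: eq_bigr => i _.
    rewrite mul_mx_diag !mxE /sgn /dbar.
    rewrite -/n -/N; have [->|op0] := eqVneq op 0; first by rewrite invr0 !(mul0r, mulr0).
    by field; rewrite op0 sNz.
  set Me := fun e : {ffun 'I_n -> bool} =>
    row j (W *m diag_mx (radvec R e) *m U *m (op^-1 *: D)).
  have hrn : forall e, rnorm (Me e) = Num.sqrt (dot (rsum w 0 e) (rsum w 0 e) / N).
    move=> e; rewrite /rnorm; congr Num.sqrt.
    rewrite /dot mulr_suml; apply: eq_bigr => c _; rewrite hrow exprMn exprVn sN.
    by rewrite expr2 mulrC.
  have hw : forall y : 'cV[R]_d, \sum_i dot (w i) y ^+ 2 <= dot y y.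
    move=> y; set z := \col_(c < d) (dbar c * y c 0).
    have e1 : forall i, dot (w i) y ^+ 2 = (U *m z) i 0 ^+ 2.
      move=> i; have -> : dot (w i) y = (W j i * Num.sqrt N) * (U *m z) i 0.
        rewrite /dot !mxE mulr_sumr; apply: eq_bigr => c _; rewrite !mxE; ring.
      by rewrite exprMn hs mul1r.
    under eq_bigr do rewrite e1.
    have -> : \sum_i (U *m z) i 0 ^+ 2 = dot z z.
      transitivity (dot (U *m z) (U *m z)); first by apply: eq_bigr => i _; rewrite expr2.
      by rewrite !dotE trmx_mul -mulmxA (mulmxA U^T) hU mul1mx.
    rewrite /dot; apply: ler_sum => c _; rewrite mxE.
    have := db1 c; have := sqr_ge0 (y c 0); have := db0 c; nra.
  have hde : \sum_i dot (w i) (w i) = de.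
    rewrite de_eq.
    transitivity (\sum_i \sum_c U i c ^+ 2 * dbar c ^+ 2).
      apply: eq_bigr => i _; apply: eq_bigr => c _; rewrite mxE.
      transitivity ((W j i * Num.sqrt N) ^+ 2 * (U i c ^+ 2 * dbar c ^+ 2)); first by ring.
      by rewrite hs mul1r.
    rewrite exchange_big; apply: eq_bigr => c _; rewrite -mulr_suml.
    have h : (U^T *m U) c c = 1 by rewrite hU mxE eqxx.
    rewrite mxE in h; rewrite (_ : \sum_i U i c ^+ 2 = 1) ?mul1r // -h.
    by apply: eq_bigr => i _; rewrite mxE expr2.
  have hcore := core lm0 lm1 hw.
  rewrite -/(Me _).
  apply: le_trans (_ : \sum_e expR (lm * dot (rsum w 0 e) (rsum w 0 e))
                          * expR (- (lm * (F + t) ^+ 2)) <= _).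
    apply: ler_sum => e _; case: ifP => h; last by rewrite mulr_ge0 ?expR_ge0.
    rewrite -expRD -expR0 ler_expR subr_ge0; apply: ler_wpM2l => //.
    by apply: thrT; [exact: dot_ge0 | rewrite -hrn].
  rewrite -mulr_suml.
  apply: le_trans (ler_wpM2r (expR_ge0 _) hcore) _.
  rewrite hde -[(2 ^ n)%:R * _ * _]mulrA -expRD ler_wpM2l ?ler0n //.
  have -> : delta / N = expR (- L).
    by rewrite expRN lnK ?invf_div // posrE divr_gt0.
  by rewrite ler_expR.
rewrite /radprob ler_pdivrMr ?ltr0n ?expn_gt0 //.
set P := fun e : {ffun 'I_n -> bool} => _.
set rn := fun (j : 'I_n) (e : {ffun 'I_n -> bool}) =>
  rnorm (row j (W *m diag_mx (radvec R e) *m U *m (op^-1 *: D))).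
have hc : #|[set e | P e]|%:R = \sum_e (if P e then 1 else 0 : R).
  by rewrite -sumr_const big_mkcond; apply: eq_bigr => e _; rewrite inE.
rewrite hc.
apply: le_trans (_ : \sum_e \sum_j (if thr <= rn j e then 1 else 0 : R) <= _).
  apply: ler_sum => e _; case: ifP => Pe; last first.
    by apply: sumr_ge0 => j _; case: ifP.
  have [j hj] := bigmax_ex thr0 Pe.
  rewrite (bigD1 j) //= /rn hj lerDl; apply: sumr_ge0 => i _; by case: ifP.
rewrite exchange_big /=.
apply: le_trans (ler_sum _ (fun j _ => perj j)) _.
rewrite sumr_const card_ord -mulr_natl -/N.
rewrite le_eqVlt; apply/orP; left; apply/eqP; field; by rewrite pnatr_eq0 -lt0n.
Qed.
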